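(* The dominant face $\mathcal{D}$ of $\mathcal{R}_{JD}$ equals the set of all $(R_1,\ldots,R_K,C_1,\ldots,C_L)\in\mathbb{R}^{K+L}$ such that, for all $\mathcal{S}\subseteq[K]$ and $\mathcal{T}\subseteq[L]$, $$I(Y_{\mathcal{T}};\hat Y_{\mathcal{T}}\mid X_1^K)-I(X_{\mathcal{S}};\hat Y_{\mathcal{T}^c}\mid X_{\mathcal{S}^c})\ \le\ C(\mathcal{T})-R(\mathcal{S})\ \le\ I(Y_{\mathcal{T}};\hat Y_{\mathcal{T}}\mid X_{\mathcal{S}}).$$
   Context: Fix integers $K,L\ge 1$ and finite alphabets. Let $X_1,\ldots,X_K,Y_1,\ldots,Y_L,\hat Y_1,\ldots,\hat Y_L$ be random variables with joint pmf $\prod_{k=1}^K p(x_k)\, p(y_1,\ldots,y_L\mid x_1,\ldots,x_K)\prod_{\ell=1}^L p(\hat y_\ell\mid y_\ell)$. Thus the $X_k$ are mutually independent, and each $\hat Y_\ell$ is conditionally independent of all other variables given $Y_\ell$. Notation: $X_{\mathcal{A}}=(X_i:i\in\mathcal{A})$, and similarly for $Y_{\mathcal{B}},\hat Y_{\mathcal{B}}$. $X_1^K=(X_1,\ldots,X_K)$, $Y_1^L=(Y_1,\ldots,Y_L)$, $\hat Y_1^L=(\hat Y_1,\ldots,\hat Y_L)$. Complements are taken in $[K]$ for $X$-indices and in $[L]$ for $Y$/$\hat Y$-indices. $R(\mathcal{S})=\sum_{i\in\mathcal{S}}R_i$ and $C(\mathcal{T})=\sum_{j\in\mathcal{T}}C_j$.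 Empty sums and mutual informations involving an empty collection are $0$. $\mathcal{R}_{JD}$ is the set of $(R_1,\ldots,R_K,C_1,\ldots,C_L)\in\mathbb{R}_{\ge0}^{K+L}$ with $$C(\mathcal{T})-R(\mathcal{S})\ge I(Y_{\mathcal{T}};\hat Y_{\mathcal{T}}\mid X_1^K)-I(X_{\mathcal{S}};\hat Y_{\mathcal{T}^c}\mid X_{\mathcal{S}^c})\quad\text{for all }\mathcal{S}\subseteq[K],\ \mathcal{T}\subseteq[L].$$ The dominant face is $$\mathcal{D}=\{(R,C)\in\mathcal{R}_{JD}: C([L])-R([K])=I(Y_1^L;\hat Y_1^L\mid X_1^K)\}.$$ *)

(* Defs.v *)
From HB Require Import structures.
From mathcomp Require Import all_boot all_order all_algebra.
From mathcomp Require Import reals exp.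
Set Implicit Arguments. Unset Strict Implicit. Unset Printing Implicit Defensive.
Import Order.TTheory GRing.Theory Num.Theory.
Local Open Scope ring_scope.

Section Defs.
Variable R : realType.

Definition is_pmf (T : finType) (p : T -> R) : Prop :=
  (forall t, 0 <= p t) /\ \sum_t p t = 1.

(* sample space: (x_1^K, y_1^L, yhat_1^L) *)
Definition omega (AX AY AYh : finType) (K L : nat) : finType :=
  ({ffun 'I_K -> AX} * {ffun 'I_L -> AY} * {ffun 'I_L -> AYh})%type.

Variables (AX AY AYh : finType) (K L : nat).
Notation Om := (omega AX AY AYh K L).

Definition joint (px : 'I_K -> AX -> R)
  (W : {ffun 'I_K -> AX} -> {ffun 'I_L -> AY} -> R)
  (Q : 'I_L -> AY -> AYh -> R) (w : Om) : R :=
  (\prod_k px k (w.1.1 k)) * W w.1.1 w.1.2 * \prod_l Q l (w.1.2 l) (w.2 l).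

(* the collections X_S, Y_T, Yhat_T as random variables (entries outside
   the index set are masked to None) *)
Definition XS (S : {set 'I_K}) (w : Om) : {ffun 'I_K -> option AX} :=
  [ffun k => if k \in S then Some (w.1.1 k) else None].
Definition YT (T : {set 'I_L}) (w : Om) : {ffun 'I_L -> option AY} :=
  [ffun l => if l \in T then Some (w.1.2 l) else None].
Definition YhT (T : {set 'I_L}) (w : Om) : {ffun 'I_L -> option AYh} :=
  [ffun l => if l \in T then Some (w.2 l) else None].
Definition Xall (w : Om) : {ffun 'I_K -> AX} := w.1.1.
End Defs.

Definition pdf (R : realType) (Om : finType) (T : eqType)
  (P : Om -> R) (f : Om -> T) (t : T) : R :=
  \sum_(w | f w == t) P w.

(* conditional mutual information I(A;B|C) in nats, with 0 log 0 = 0 *)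
Definition cmi (R : realType) (Om T1 T2 T3 : finType) (P : Om -> R)
  (A : Om -> T1) (B : Om -> T2) (C : Om -> T3) : R :=
  \sum_(a : T1) \sum_(b : T2) \sum_(c : T3)
    let pabc := pdf P (fun w => (A w, B w, C w)) (a, b, c) in
    if pabc == 0 then 0 else
      pabc * ln (pabc * pdf P C c /
                 (pdf P (fun w => (A w, C w)) (a, c) *
                  pdf P (fun w => (B w, C w)) (b, c))).

Definition sumR (R : realType) (K : nat) (r : 'I_K -> R) (S : {set 'I_K}) : R :=
  \sum_(i in S) r i.

Definition RJD (R : realType) (AX AY AYh : finType) (K L : nat)
  (P : omega AX AY AYh K L -> R) (r : 'I_K -> R) (c : 'I_L -> R) : Prop :=
  (forall k, 0 <= r k) /\ (forall l, 0 <= c l) /\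
  forall (S : {set 'I_K}) (T : {set 'I_L}),
    cmi P (YT T) (YhT T) (@Xall AX AY AYh K L)
      - cmi P (XS S) (YhT (~: T)) (XS (~: S))
    <= sumR c T - sumR r S.

Definition dominant_face (R : realType) (AX AY AYh : finType) (K L : nat)
  (P : omega AX AY AYh K L -> R) (r : 'I_K -> R) (c : 'I_L -> R) : Prop :=
  RJD P r c /\
  sumR c [set: 'I_L] - sumR r [set: 'I_K] =
    cmi P (YT [set: 'I_L]) (YhT [set: 'I_L]) (@Xall AX AY AYh K L).

(* Main.v *)
Require Import Defs.
From HB Require Import structures.
From mathcomp Require Import all_boot all_order all_algebra.
From mathcomp Require Import reals exp.
From mathcomp Require Import ring lra.
Import Order.TTheory GRing.Theory Num.Theory.
Local Open Scope ring_scope.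
Set Implicit Arguments. Unset Strict Implicit.

Section Gen.
Variables (R : realType) (Om : finType) (P : Om -> R).
Hypothesis P0 : forall w, 0 <= P w.

Lemma pdf_ge (T : eqType) (F : Om -> T) w : P w <= pdf P F (F w).
Proof.
rewrite /pdf (bigD1 w) //= lerDl; apply: sumr_ge0 => *; exact: P0.
Qed.

Lemma pdf_ge0 (T : eqType) (F : Om -> T) t : 0 <= pdf P F t.
Proof. apply: sumr_ge0 => *; exact: P0. Qed.

Lemma sum_pdf (T : finType) (F : Om -> T) (g : T -> R) :
  \sum_t pdf P F t * g t = \sum_w P w * g (F w).
Proof.
rewrite (partition_big F (fun _ => true)) //=.
apply: eq_bigr => t _; rewrite /pdf mulr_suml.
by apply: eq_bigr => w /eqP ->.
Qed.

Lemma pdf_marg (T1 T3 : finType) (A : Om -> T1) (C : Om -> T3) c :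
  \sum_a pdf P (fun w => (A w, C w)) (a, c) = pdf P C c.
Proof.
rewrite /pdf (partition_big A (fun _ => true) (P := fun w => C w == c)) //=.
apply: eq_bigr => a _; apply: eq_bigl => w; by rewrite xpair_eqE andbC.
Qed.

Definition Hn (T : eqType) (F : Om -> T) := - \sum_w P w * ln (pdf P F (F w)).

Lemma Hn_eq (T1 T2 : eqType) (F : Om -> T1) (G : Om -> T2) :
  (forall w w', (F w' == F w) = (G w' == G w)) -> Hn F = Hn G.
Proof.
move=> H; rewrite /Hn; congr (- _); apply: eq_bigr => w _.
by rewrite /pdf (eq_bigl _ _ (H w)).
Qed.

Lemma cmi_sumw (T1 T2 T3 : finType) (A : Om -> T1) (B : Om -> T2) (C : Om -> T3) :
  cmi P A B C = \sum_w P w *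
    ln (pdf P (fun w => (A w, B w, C w)) (A w, B w, C w) * pdf P C (C w) /
        (pdf P (fun w => (A w, C w)) (A w, C w) * pdf P (fun w => (B w, C w)) (B w, C w))).
Proof.
set F3 := (fun w => (A w, B w, C w)).
pose G (t : T1 * T2 * T3) := ln (pdf P F3 t * pdf P C t.2 /
        (pdf P (fun w => (A w, C w)) (t.1.1, t.2) * pdf P (fun w => (B w, C w)) (t.1.2, t.2))).
rewrite -(sum_pdf F3 G) /cmi pair_big /=.
rewrite pair_big /=; apply: eq_bigr => [[[a b] c']] _ /=.
case: eqP => [->|_]; first by rewrite mul0r.
by [].
Qed.

Lemma sum_triple (T1 T2 T3 : finType) (f : T1 * T2 * T3 -> R) :
  \sum_t f t = \sum_a \sum_b \sum_c f (a, b, c).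
Proof.
have -> : \sum_t f t = \sum_ab \sum_c f (ab, c).
  by rewrite pair_bigA; apply: congr_big => // -[].
by rewrite [RHS]pair_bigA /=; apply: congr_big => // -[] ?? _.
Qed.

Lemma pdf_pos (T : eqType) (F : Om -> T) w : P w != 0 -> 0 < pdf P F (F w).
Proof. move=> H; apply: lt_le_trans (pdf_ge F w); by rewrite lt0r H P0. Qed.

Lemma cmi_H (T1 T2 T3 : finType) (A : Om -> T1) (B : Om -> T2) (C : Om -> T3) :
  cmi P A B C = Hn (fun w => (A w, C w)) + Hn (fun w => (B w, C w))
              - Hn (fun w => (A w, B w, C w)) - Hn C.
Proof.
rewrite cmi_sumw /Hn -!sumrN -!big_split /=; apply: eq_bigr => w _.
have [->|Pw] := eqVneq (P w) 0; first by rewrite !mul0r !oppr0 !addr0.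
have h3 := pdf_pos (fun w => (A w, B w, C w)) Pw.
have hc := pdf_pos C Pw.
have hac := pdf_pos (fun w => (A w, C w)) Pw.
have hbc := pdf_pos (fun w => (B w, C w)) Pw.
rewrite ln_div ?posrE ?mulr_gt0 // !lnM ?posrE //.
ring.
Qed.

Lemma ln_le_sub1 (x : R) : 0 < x -> ln x <= x - 1.
Proof.
move=> x0; have := @le_ln1Dx R (x - 1).
rewrite addrCA subrr addr0; apply; lra.
Qed.

Lemma cmi_ge0 (T1 T2 T3 : finType) (A : Om -> T1) (B : Om -> T2) (C : Om -> T3) :
  0 <= cmi P A B C.
Proof.
rewrite cmi_sumw.
set F3 := (fun w => (A w, B w, C w)).
pose pac := pdf P (fun w => (A w, C w)).
pose pbc := pdf P (fun w => (B w, C w)).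
pose h (t : T1 * T2 * T3) := pac (t.1.1, t.2) * pbc (t.1.2, t.2) / pdf P C t.2.
pose g t := h t / pdf P F3 t.
have step1 : \sum_w P w * (1 - g (F3 w)) <= \sum_w P w *
    ln (pdf P F3 (F3 w) * pdf P C (C w) / (pac (A w, C w) * pbc (B w, C w))).
  apply: ler_sum => w _.
  have [->|Pw] := eqVneq (P w) 0; first by rewrite !mul0r.
  have h3 := pdf_pos F3 Pw.
  have hc := pdf_pos C Pw.
  have hac := pdf_pos (fun w => (A w, C w)) Pw.
  have hbc := pdf_pos (fun w => (B w, C w)) Pw.
  rewrite ler_wpM2l ?P0 //.
  have gpos : 0 < g (F3 w) by rewrite /g /h /= !divr_gt0 ?mulr_gt0.
  have -> : pdf P F3 (F3 w) * pdf P C (C w) / (pac (A w, C w) * pbc (B w, C w))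
     = (g (F3 w))^-1.
    rewrite /g /h /= !invfM !invrK; field.
    by rewrite !gt_eqF.
  rewrite lnV ?posrE //; have := ln_le_sub1 gpos; lra.
apply: le_trans step1.
have step2 : \sum_w P w * g (F3 w) <= \sum_w P w.
  rewrite -(sum_pdf F3 g).
  apply: (@le_trans _ _ (\sum_t h t)).
    apply: ler_sum => t _; rewrite /g.
    have [->|nz] := eqVneq (pdf P F3 t) 0; first by rewrite mul0r /h divr_ge0 ?mulr_ge0 ?pdf_ge0.
    by rewrite mulrC divfK.
  rewrite sum_triple.
  rewrite (eq_bigr (fun a => \sum_c \sum_b h (a, b, c))); last first.
    by move=> a _; rewrite exchange_big.
  rewrite exchange_big /=.
  rewrite [X in _ <= X](partition_big C (fun _ => true)) //=; apply: ler_sum => c _.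
  rewrite -/(pdf P C c).
  rewrite (eq_bigr (fun a => pac (a, c) * (\sum_b pbc (b, c)) / pdf P C c)); last first.
    move=> a _; rewrite /h /= mulr_sumr mulr_suml; apply: eq_bigr => b _; ring.
  rewrite -mulr_suml -mulr_suml /pac /pbc !pdf_marg.
  have [->|nz] := eqVneq (pdf P C c) 0; first by rewrite !mul0r lexx.
  by rewrite mulfK ?lexx.
rewrite (eq_bigr (fun w => P w - P w * g (F3 w))); last by move=> w _; ring.
rewrite sumrB subr_ge0 //.
Qed.

Lemma cmi_constA (T1 T2 T3 : finType) (A : Om -> T1) (B : Om -> T2) (C : Om -> T3) :
  (forall w w', A w' == A w) -> cmi P A B C = 0.
Proof.
move=> HA; rewrite cmi_H.
rewrite (@Hn_eq _ _ (fun w => (A w, C w)) C); last by move=> w w'; rewrite xpair_eqE HA.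
rewrite (@Hn_eq _ _ (fun w => (A w, B w, C w)) (fun w => (B w, C w))); last first.
  by move=> w w'; rewrite !xpair_eqE HA.
ring.
Qed.

Lemma cmi_constB (T1 T2 T3 : finType) (A : Om -> T1) (B : Om -> T2) (C : Om -> T3) :
  (forall w w', B w' == B w) -> cmi P A B C = 0.
Proof.
move=> HB; rewrite cmi_H.
rewrite (@Hn_eq _ _ (fun w => (B w, C w)) C); last by move=> w w'; rewrite xpair_eqE HB.
rewrite (@Hn_eq _ _ (fun w => (A w, B w, C w)) (fun w => (A w, C w))); last first.
  by move=> w w'; rewrite !xpair_eqE HB andbT.
ring.
Qed.

Lemma cmi_eqC (T1 T2 T3 T3' : finType) (A : Om -> T1) (B : Om -> T2) (C : Om -> T3)
  (C' : Om -> T3') :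
  (forall w w', (C w' == C w) = (C' w' == C' w)) -> cmi P A B C = cmi P A B C'.
Proof.
move=> HC; rewrite !cmi_H.
rewrite (@Hn_eq _ _ (fun w => (A w, C w)) (fun w => (A w, C' w))); last first.
  by move=> w w'; rewrite !xpair_eqE HC.
rewrite (@Hn_eq _ _ (fun w => (B w, C w)) (fun w => (B w, C' w))); last first.
  by move=> w w'; rewrite !xpair_eqE HC.
rewrite (@Hn_eq _ _ (fun w => (A w, B w, C w)) (fun w => (A w, B w, C' w))); last first.
  by move=> w w'; rewrite !xpair_eqE HC.
by rewrite (@Hn_eq _ _ C C').
Qed.

Definition Hn1 (T : finType) (C : Om -> T) := Hn C.
Definition Hn2 (T1 T2 : finType) (A : Om -> T1) (C : Om -> T2) := Hn (fun w => (A w, C w)).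
Definition Hn3 (T1 T2 T3 : finType) (A : Om -> T1) (B : Om -> T2) (C : Om -> T3) :=
  Hn (fun w => (A w, B w, C w)).

Lemma cmi_H' (T1 T2 T3 : finType) (A : Om -> T1) (B : Om -> T2) (C : Om -> T3) :
  cmi P A B C = Hn2 A C + Hn2 B C - Hn3 A B C - Hn1 C.
Proof. exact: cmi_H. Qed.
End Gen.

Lemma eq_mask (I : finType) (T : eqType) (U : {set I}) (f g : I -> T) :
  ([ffun i => if i \in U then Some (f i) else None] ==
   [ffun i => if i \in U then Some (g i) else None] :> {ffun I -> option T})
  = [forall i in U, f i == g i].
Proof.
apply/eqP/forallP => [H i | H].
  have := congr1 (fun h : {ffun I -> option T} => h i) H; rewrite !ffunE.
  by case: (i \in U) => //= -[->].
apply/ffunP => i; rewrite !ffunE; have := H i.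
by case: (i \in U) => //= /eqP ->.
Qed.

Lemma eq_ffun_split (I : finType) (T : eqType) (U : {set I}) (f g : {ffun I -> T}) :
  (f == g) = [forall i in U, f i == g i] && [forall i in ~: U, f i == g i].
Proof.
apply/eqP/andP => [->|[/forallP H1 /forallP H2]].
  by split; apply/forallP => i; rewrite eqxx implybT.
apply/ffunP => i; have := H1 i; have := H2 i; rewrite in_setC.
by case: (i \in U) => /= [_ /eqP|/eqP].

Qed.

Lemma eq_ffun_all (I : finType) (T : eqType) (f g : {ffun I -> T}) :
  (f == g) = [forall i in [set: I], f i == g i].
Proof.
apply/eqP/forallP => [-> i|H]; first by rewrite eqxx implybT.
by apply/ffunP => i; have := H i; rewrite in_setT => /eqP.
Qed.

Lemma forall_set0 (I : finType) (e : I -> bool) : [forall i in set0, e i] = true.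
Proof. by apply/forallP => i; rewrite in_set0. Qed.

Lemma sum_split (I : finType) (R : realType) (F : I -> R) (T : {set I}) :
  \sum_(i in [set: I]) F i = \sum_(i in T) F i + \sum_(i in ~: T) F i.
Proof.
rewrite (bigID (mem T)) /=; congr (_ + _); apply: eq_bigl => i; rewrite ?in_setT ?in_setC //.
Qed.

Lemma prod_split (I : finType) (R : realType) (F : I -> R) (T : {set I}) :
  \prod_(i in [set: I]) F i = \prod_(i in T) F i * \prod_(i in ~: T) F i.
Proof.
rewrite (bigID (mem T)) /=; congr (_ * _); apply: eq_bigl => i; rewrite ?in_setT ?in_setC //.
Qed.

Section Model.
Variables (R : realType) (AX AY AYh : finType) (K L : nat).
Variables (px : 'I_K -> AX -> R)
  (W : {ffun 'I_K -> AX} -> {ffun 'I_L -> AY} -> R)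
  (Q : 'I_L -> AY -> AYh -> R).
Hypotheses (Hpx : forall k, is_pmf (px k)) (HW : forall x, is_pmf (W x))
  (HQ : forall l y, is_pmf (Q l y)).

Let Om := omega AX AY AYh K L.
Let P := joint px W Q.

Lemma P0 w : 0 <= P w.
Proof.
rewrite /P /joint; apply: mulr_ge0; [apply: mulr_ge0|].
- by apply: prodr_ge0 => k _; apply: (Hpx k).1.
- exact: (HW _).1.
- by apply: prodr_ge0 => l _; apply: (HQ _ _).1.
Qed.

Lemma sumQ (y : {ffun 'I_L -> AY}) (U : {set 'I_L}) (yh0 : {ffun 'I_L -> AYh}) :
  \sum_(yh : {ffun 'I_L -> AYh})
     (if [forall l in U, yh l == yh0 l] then \prod_l Q l (y l) (yh l) else 0)
  = \prod_(l in U) Q l (y l) (yh0 l).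
Proof.
pose F l a := if l \in U then (if a == yh0 l then Q l (y l) a else 0) else Q l (y l) a.
have E := bigA_distr_bigA F.
transitivity (\sum_(yh : {ffun 'I_L -> AYh}) \prod_l F l (yh l)).
  apply: eq_bigr => yh _.
  case: forallP => [H|H].
    apply: eq_bigr => l _; rewrite /F; have := H l.
    by case: (l \in U) => //= /eqP ->; rewrite eqxx.
  have [l] : exists l, ~~ ((l \in U) ==> (yh l == yh0 l)).
    apply/existsP; apply: contraT; rewrite negb_exists => /forallP H'.
    by case: H => l; have := H' l; rewrite negbK.
  rewrite negb_imply => /andP [lU ne].
  by rewrite (bigD1 l) //= /F lU (negbTE ne) mul0r.
rewrite -E [RHS]big_mkcond /=; apply: eq_bigr => l _; rewrite /F.
case: (l \in U).
  by rewrite -big_mkcond /= big_pred1_eq.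
exact: (HQ _ _).2.
Qed.

Lemma sumQ1 (y : {ffun 'I_L -> AY}) :
  \sum_(yh : {ffun 'I_L -> AYh}) \prod_l Q l (y l) (yh l) = 1.
Proof.
rewrite -(bigA_distr_bigA (fun l a => Q l (y l) a)) /=.
by apply: big1 => l _; exact: (HQ _ _).2.
Qed.

Lemma P_eq x y yh : P ((x, y), yh) =
  ((\prod_k px k (x k)) * W x y) * \prod_l Q l (y l) (yh l).
Proof. by []. Qed.

Lemma pdf_fact (U : {set 'I_L}) (S' : {set 'I_K}) (w0 : Om) :
  pdf P (fun w => (YT U w, YhT U w, XS S' w)) (YT U w0, YhT U w0, XS S' w0)
  = pdf P (fun w => (YT U w, XS S' w)) (YT U w0, XS S' w0)
    * \prod_(l in U) Q l (w0.1.2 l) (w0.2 l).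
Proof.
pose A (x : {ffun 'I_K -> AX}) (y : {ffun 'I_L -> AY}) := (\prod_k px k (x k)) * W x y.
pose c1 (x : {ffun 'I_K -> AX}) (y : {ffun 'I_L -> AY}) :=
  [forall l in U, y l == w0.1.2 l] && [forall k in S', x k == w0.1.1 k].
have E2 : pdf P (fun w => (YT U w, XS S' w)) (YT U w0, XS S' w0)
    = \sum_x \sum_y (if c1 x y then A x y else 0).
  rewrite /pdf big_mkcond sum_triple; apply: eq_bigr => x _; apply: eq_bigr => y _.
  have Hc : forall yh : {ffun 'I_L -> AYh}, ((YT U ((x, y), yh), XS S' ((x, y), yh)) == (YT U w0, XS S' w0))
             = c1 x y.
    by move=> yh; rewrite xpair_eqE /YT /XS !eq_mask.
  under eq_bigr => yh _ do rewrite Hc P_eq.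
  case: (c1 x y); last by rewrite big1.
  by rewrite -mulr_sumr sumQ1 mulr1.
have E3 : pdf P (fun w => (YT U w, YhT U w, XS S' w)) (YT U w0, YhT U w0, XS S' w0)
    = \sum_x \sum_y (if c1 x y then A x y else 0) * \prod_(l in U) Q l (w0.1.2 l) (w0.2 l).
  rewrite /pdf big_mkcond sum_triple; apply: eq_bigr => x _.
  apply: eq_bigr => y _.
  have Hc : forall yh : {ffun 'I_L -> AYh}, ((YT U ((x, y), yh), YhT U ((x, y), yh), XS S' ((x, y), yh))
       == (YT U w0, YhT U w0, XS S' w0))
             = c1 x y && [forall l in U, yh l == w0.2 l].
    by move=> yh; rewrite !xpair_eqE /YT /YhT /XS !eq_mask /c1 /= -!andbA; congr (_ && _); rewrite andbC.
  transitivity (\sum_(yh : {ffun 'I_L -> AYh}) (if c1 x y && [forall l in U, yh l == w0.2 l] then A x y * \prod_l Q l (y l) (yh l) else 0)).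
    by apply: eq_bigr => yh _; rewrite -Hc.
  case Hc1: (c1 x y) => /=; last by rewrite mul0r big1.
  rewrite (eq_bigr (fun yh : {ffun 'I_L -> AYh} => A x y *
     (if [forall l in U, yh l == w0.2 l] then \prod_l Q l (y l) (yh l) else 0))); last first.
    by move=> yh _; case: ifP; rewrite ?mulr0.
  rewrite -mulr_sumr sumQ; congr (_ * _); apply: eq_bigr => l lU.
  move/andP: Hc1 => [/forallP HU _]; have := HU l; rewrite lU /= => /eqP -> //.
by rewrite E3 E2 mulr_suml; apply: eq_bigr => x _; rewrite mulr_suml.
Qed.

Definition gq (U : {set 'I_L}) :=
  - \sum_(w : Om) P w * ln (\prod_(l in U) Q l (w.1.2 l) (w.2 l)).

Lemma M1 (U : {set 'I_L}) (S' : {set 'I_K}) :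
  Hn P (fun w => (YT U w, YhT U w, XS S' w)) = Hn P (fun w => (YT U w, XS S' w)) + gq U.
Proof.
rewrite /Hn /gq -opprD -big_split; congr (- _); apply: eq_bigr => w _ /=.
rewrite pdf_fact.
have [->|Pw] := eqVneq (P w) 0; first by rewrite !mul0r addr0.
have h2 := pdf_pos P0 (fun w => (YT U w, XS S' w)) Pw.
have h3 := pdf_pos P0 (fun w => (YT U w, YhT U w, XS S' w)) Pw.
rewrite /= pdf_fact in h3.
have hq : 0 < \prod_(l in U) Q l (w.1.2 l) (w.2 l).
  rewrite lt0r prodr_ge0 ?andbT; last by move=> l _; apply: (HQ _ _).1.
  by apply: contraTneq h3 => ->; rewrite mulr0 ltxx.
by rewrite lnM ?posrE // mulrDr.
Qed.

Lemma gq_split (T : {set 'I_L}) : gq [set: 'I_L] = gq T + gq (~: T).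
Proof.
rewrite /gq -opprD -big_split; congr (- _); apply: eq_bigr => w _ /=.
have [->|Pw] := eqVneq (P w) 0; first by rewrite !mul0r addr0.
rewrite -mulrDr (prod_split _ T).
have hall : \prod_(l in [set: 'I_L]) Q l (w.1.2 l) (w.2 l) != 0.
  apply: contraNneq Pw; rewrite (eq_bigl (fun _ => true)); last by move=> l; rewrite in_setT.
  by case: w => [[x y] yh] /= H; rewrite P_eq H mulr0.
rewrite (prod_split _ T) mulf_eq0 negb_or in hall; case/andP: hall => h1 h2.
have ge : forall U : {set 'I_L}, 0 <= \prod_(l in U) Q l (w.1.2 l) (w.2 l).
  by move=> U; apply: prodr_ge0 => l _; apply: (HQ _ _).1.
have p1 : 0 < \prod_(l in T) Q l (w.1.2 l) (w.2 l) by rewrite lt0r h1 ge.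
have p2 : 0 < \prod_(l in ~: T) Q l (w.1.2 l) (w.2 l) by rewrite lt0r h2 ge.
by rewrite lnM ?posrE.
Qed.

Lemma eqXS_all (w w' : Om) : (XS [set: 'I_K] w' == XS [set: 'I_K] w) = (Xall w' == Xall w).
Proof. by rewrite /XS /Xall eq_mask eq_ffun_all. Qed.

Lemma eqX_split (S : {set 'I_K}) (w w' : Om) :
  (Xall w' == Xall w) = (XS S w' == XS S w) && (XS (~: S) w' == XS (~: S) w).
Proof. by rewrite /XS /Xall !eq_mask (eq_ffun_split S). Qed.

Lemma eqYh_split (T : {set 'I_L}) (w w' : Om) :
  (YhT [set: 'I_L] w' == YhT [set: 'I_L] w) = (YhT T w' == YhT T w) && (YhT (~: T) w' == YhT (~: T) w).
Proof. by rewrite /YhT !eq_mask -eq_ffun_all (eq_ffun_split T). Qed.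

Lemma core (S : {set 'I_K}) (T : {set 'I_L}) :
  cmi P (YT [set: 'I_L]) (YhT [set: 'I_L]) (@Xall AX AY AYh K L)
  - cmi P (YT (~: T)) (YhT (~: T)) (@Xall AX AY AYh K L)
  + cmi P (XS (~: S)) (YhT T) (XS S) <= cmi P (YT T) (YhT T) (XS S).
Proof.
have e7 := cmi_ge0 P0 (YhT T) (YhT (~: T)) (@Xall AX AY AYh K L).
have e1 : forall U : {set 'I_L},
  Hn P (fun w => (YT U w, YhT U w, @Xall AX AY AYh K L w)) =
  Hn P (fun w => (YT U w, @Xall AX AY AYh K L w)) + gq U.
  move=> U.
  rewrite (@Hn_eq _ _ _ _ _ _ (fun w => (YT U w, YhT U w, XS [set: 'I_K] w))); last first.
    by move=> w w'; rewrite !xpair_eqE eqXS_all.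
  rewrite M1; congr (_ + _); apply: Hn_eq => w w'.
  by rewrite !xpair_eqE eqXS_all.
have e5 : Hn P (fun w => (XS (~: S) w, XS S w)) = Hn P (@Xall AX AY AYh K L).
  by apply: Hn_eq => w w'; rewrite xpair_eqE (eqX_split S) andbC.
have e6 : Hn P (fun w => (XS (~: S) w, YhT T w, XS S w)) =
          Hn P (fun w => (YhT T w, @Xall AX AY AYh K L w)).
  apply: Hn_eq => w w'; rewrite !xpair_eqE (eqX_split S).
  by case: (XS S w' == _); case: (XS (~: S) w' == _); case: (YhT T w' == _).
have e8 : Hn P (fun w => (YhT T w, YhT (~: T) w, @Xall AX AY AYh K L w)) =
          Hn P (fun w => (YhT [set: 'I_L] w, @Xall AX AY AYh K L w)).
  by apply: Hn_eq => w w'; rewrite !xpair_eqE (eqYh_split T).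
have e3 : Hn3 P (YT T) (YhT T) (XS S) = Hn2 P (YT T) (XS S) + gq T := M1 T S.
have e4 := gq_split T.
have e1' : forall U : {set 'I_L}, Hn3 P (YT U) (YhT U) (@Xall AX AY AYh K L) =
  Hn2 P (YT U) (@Xall AX AY AYh K L) + gq U := e1.
have e5' : Hn2 P (XS (~: S)) (XS S) = Hn1 P (@Xall AX AY AYh K L) := e5.
have e6' : Hn3 P (XS (~: S)) (YhT T) (XS S) = Hn2 P (YhT T) (@Xall AX AY AYh K L) := e6.
have e8' : Hn3 P (YhT T) (YhT (~: T)) (@Xall AX AY AYh K L) =
  Hn2 P (YhT [set: 'I_L]) (@Xall AX AY AYh K L) := e8.
rewrite !(cmi_H' P0) in e7 *.
rewrite e1' e1' e3 e5' e6' e8' e4 in e7 *.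
lra.
Qed.

Lemma main (r : 'I_K -> R) (c : 'I_L -> R) :
  dominant_face P r c <->
  (forall (S : {set 'I_K}) (T : {set 'I_L}),
     cmi P (YT T) (YhT T) (@Xall AX AY AYh K L)
       - cmi P (XS S) (YhT (~: T)) (XS (~: S))
     <= sumR c T - sumR r S
     <= cmi P (YT T) (YhT T) (XS S)).
Proof.
split.
  case=> [[r0 [c0 lo]] eq] S T; apply/andP; split; first exact: lo.
  have h := lo (~: S) (~: T); rewrite !setCK in h.
  have hc := core S T.
  have sc := sum_split c T.
  have sr := sum_split r S.
  rewrite /sumR in eq h sc sr *.
  lra.
move=> H; split; [split; [|split]|].
- move=> k; have /andP [_ h] := H [set k] set0.
  rewrite /sumR big_set0 big_set1 (@cmi_constA _ _ _ P0) in h; first lra.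
  by move=> w w'; rewrite /YT eq_mask forall_set0.
- move=> l; have /andP [h _] := H set0 [set l].
  rewrite /sumR big_set0 big_set1 (@cmi_constA _ _ _ P0 _ _ _ (XS set0)) in h; last first.
    by move=> w w'; rewrite /XS eq_mask forall_set0.
  have := cmi_ge0 P0 (YT [set l]) (YhT [set l]) (@Xall AX AY AYh K L); lra.
- by move=> S T; case/andP: (H S T).
have /andP [h1 h2] := H [set: 'I_K] [set: 'I_L].
rewrite !setCT (@cmi_constB _ _ _ P0 _ _ _ _ (YhT set0)) in h1; last first.
  by move=> w w'; rewrite /YhT eq_mask forall_set0.
rewrite (@cmi_eqC _ _ _ P0 _ _ _ _ _ _ _ (@Xall AX AY AYh K L)) in h2; last first.
  by move=> w w'; rewrite eqXS_all.
apply/eqP; rewrite eq_le; apply/andP; split; lra.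
Qed.
End Model.

Unset Implicit Arguments. Set Strict Implicit.

Theorem lemma3 (R : realType) (AX AY AYh : finType) (K L : nat)
  (HK : (0 < K)%N) (HL : (0 < L)%N)
  (px : 'I_K -> AX -> R)
  (W : {ffun 'I_K -> AX} -> {ffun 'I_L -> AY} -> R)
  (Q : 'I_L -> AY -> AYh -> R)
  (Hpx : forall k, is_pmf (px k))
  (HW : forall x, is_pmf (W x))
  (HQ : forall l y, is_pmf (Q l y))
  (r : 'I_K -> R) (c : 'I_L -> R) :
  let P := joint px W Q in
  dominant_face P r c <->
  (forall (S : {set 'I_K}) (T : {set 'I_L}),
     cmi P (YT T) (YhT T) (@Xall AX AY AYh K L)
       - cmi P (XS S) (YhT (~: T)) (XS (~: S))
     <= sumR c T - sumR r S
     <= cmi P (YT T) (YhT T) (XS S)).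
Proof. exact: (main Hpx HW HQ). Qed.
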